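(* Let $n\ge1$ and let $q$ be an integer coprime to $n$. (a) The linking form $(q/n)$ on $\mathbb Z_n$ is simple if and only if $q$ is congruent modulo $n$ to plus or minus a quadratic residue mod $n$ (i.e. $q\equiv\pm k^2 \pmod n$ for some integer $k$). (b) The linking form $(q/n)$ on $\mathbb Z_n$ is semisimple if and only if there is a factorization $n=n_1\cdots n_k$ with the $n_i$ pairwise relatively prime such that each form $(q_i/n_i)$ is simple, where $q_i=qn/n_i$.
   Context: For $n\ge1$ and $q$ coprime to $n$, $(q/n)$ denotes the nondegenerate symmetric linking form on $\mathbb Z_n$ with values in $\mathbb Q/\mathbb Z$ whose value on a generator paired with itself is $q/n$; $(q/n)\cong(q'/n)$ iff $q'\equiv k^2q \pmod n$ for some $k$ coprime to $n$. A linking form is simple if it is isomorphic to $(\pm1/m)$ for some $m\ge1$ (including the trivial form on $\mathbb Z_1=0$), and semisimple if it is isomorphic to an orthogonal direct sum of simple forms. *)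

(* Defs.v *)
From HB Require Import structures.
From mathcomp Require Import all_boot all_order all_algebra.
Set Implicit Arguments. Unset Strict Implicit. Unset Printing Implicit Defensive.
Import Order.TTheory GRing.Theory Num.Theory.
Local Open Scope ring_scope.

(* Values in Q/Z are represented by rationals, compared modulo integers. *)
Definition qz_eq (x y : rat) : Prop := (x - y) \is a Num.int.

Definition lform (G : zmodType) := G -> G -> rat.

Definition form_iso (G H : zmodType) (b : lform G) (c : lform H) : Prop :=
  exists f : G -> H,
    {morph f : x y / x + y} /\ bijective f /\
    forall x y, qz_eq (c (f x) (f y)) (b x y).

(* The cyclic group Z_n for n >= 1 (for n >= 1, n.-1.+1 = n). *)
Definition Zn (n : nat) : zmodType := 'I_(n.-1).+1.

Definition cform (n : nat) (q : int) : lform (Zn n) :=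
  fun x y => q%:~R * (nat_of_ord x)%:R * (nat_of_ord y)%:R / n%:R.

Arguments cform : clear implicits.

Definition osum (G H : zmodType) (b : lform G) (c : lform H) : lform (G * H)%type :=
  fun x y => b x.1 y.1 + c x.2 y.2.

(* Simple: isomorphic to (1/m) or (-1/m) for some m >= 1 (m = 1 gives the
   trivial form on Z_1 = 0). *)
Definition simple_form (G : zmodType) (b : lform G) : Prop :=
  exists (m : nat) (e : int), (0 < m)%N /\ (e = 1 \/ e = -1) /\
    form_iso b (cform m e).

(* Semisimple: isomorphic to an orthogonal direct sum of finitely many
   simple forms (the empty sum being the trivial form on 0 = Z_1). *)
Inductive semisimple_form : forall G : zmodType, lform G -> Prop :=
| ss_nil (G : zmodType) (b : lform G) :
    form_iso b (cform 1 1) -> semisimple_form b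
| ss_cons (G H1 H2 : zmodType) (b : lform G) (c1 : lform H1) (c2 : lform H2) :
    simple_form c1 -> semisimple_form c2 -> form_iso b (osum c1 c2) ->
    semisimple_form b.

(* Main.v *)
Require Import Defs.
From HB Require Import structures.
From mathcomp Require Import all_boot all_order all_algebra.
Import Order.TTheory GRing.Theory Num.Theory.
Local Open Scope ring_scope.
From mathcomp Require Import ring.

Lemma qz_refl x : qz_eq x x.
Proof. by rewrite /qz_eq subrr. Qed.
Lemma qz_sym x y : qz_eq x y -> qz_eq y x.
Proof. by rewrite /qz_eq => h; rewrite -opprB rpredN. Qed.
Lemma qz_trans x y z : qz_eq x y -> qz_eq y z -> qz_eq x z.
Proof.
rewrite /qz_eq => h1 h2; have -> : x - z = (x - y) + (y - z) by rewrite addrA subrK.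
exact: rpredD.
Qed.
Lemma qz_int x : x \is a Num.int -> qz_eq x 0.
Proof. by rewrite /qz_eq subr0. Qed.
Lemma qz_add x y x' y' : qz_eq x x' -> qz_eq y y' -> qz_eq (x + y) (x' + y').
Proof.
rewrite /qz_eq => h1 h2.
have -> : x + y - (x' + y') = (x - x') + (y - y') by rewrite opprD addrACA.
exact: rpredD.
Qed.

Lemma qz_frac (n : nat) (a b : int) : (0 < n)%N ->
  qz_eq (a%:~R / n%:R) (b%:~R / n%:R) <-> (a = b %[mod n%:Z])%Z.
Proof.
move=> n0; rewrite /qz_eq -mulrBl -rmorphB /=.
split.
- move=> /intrP [z hz]; apply/eqP; rewrite eqz_mod_dvd; apply/dvdzP; exists z.
  have nz : (n%:R : rat) != 0 by rewrite pnatr_eq0 -lt0n.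
  apply: (@intr_inj rat); rewrite rmorphM /= -hz -[(n%:Z)%:~R]/(n%:R : rat).
  by rewrite divfK.
- move=> h; have : (n%:Z %| a - b)%Z by rewrite -eqz_mod_dvd h.
  by move/Qint_dvdz.
Qed.

Lemma cformE n q (x y : Zn n) :
  cform n q x y = (q * (nat_of_ord x)%:Z * (nat_of_ord y)%:Z)%:~R / n%:R.
Proof. by rewrite /cform !rmorphM. Qed.

Lemma iso_refl (G : zmodType) (b : lform G) : form_iso b b.
Proof.
exists id; split => //; split; first by exists id.
move=> x y; exact: qz_refl.
Qed.

Lemma iso_trans (G H K : zmodType) (b : lform G) (c : lform H) (d : lform K) :
  form_iso b c -> form_iso c d -> form_iso b d.
Proof.
move=> [f [fD [fb fr]]] [g [gD [gb gr]]].
exists (g \o f); split; first by move=> x y /=; rewrite fD gD.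
split; first exact: bij_comp gb fb.
move=> x y /=; exact: qz_trans (gr _ _) (fr _ _).
Qed.

Lemma iso_sym (G H : zmodType) (b : lform G) (c : lform H) :
  form_iso b c -> form_iso c b.
Proof.
move=> [f [fD [[g fK gK] fr]]].
exists g; split.
  move=> x y; apply: (can_inj fK); by rewrite fD !gK.
split; first by exists f.
move=> x y; have := fr (g x) (g y); rewrite !gK; exact: qz_sym.
Qed.

Lemma iso_osum (G1 G2 H1 H2 : zmodType) (b1 : lform G1) (b2 : lform G2)
  (c1 : lform H1) (c2 : lform H2) :
  form_iso b1 c1 -> form_iso b2 c2 -> form_iso (osum b1 b2) (osum c1 c2).
Proof.
move=> [f [fD [[fi fK fiK] fr]]] [g [gD [[gi gK giK] gr]]].
exists (fun x => (f x.1, g x.2)); split.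
  by move=> [x1 x2] [y1 y2] /=; rewrite fD gD.
split; first by exists (fun x => (fi x.1, gi x.2)) => [[x1 x2]|[x1 x2]] /=;
  rewrite ?fK ?gK ?fiK ?giK.
move=> [x1 x2] [y1 y2]; rewrite /osum /=; exact: qz_add.
Qed.

Lemma ss_iso (G H : zmodType) (b : lform G) (c : lform H) :
  form_iso b c -> semisimple_form c -> semisimple_form b.
Proof.
move=> bc sc; case: sc bc => [G' b' h | G' H1 H2 b' c1 c2 s1 s2 h] bc.
  apply: ss_nil; exact: iso_trans bc h.
apply: (ss_cons s1 s2); exact: iso_trans bc h.
Qed.


Lemma valZn_lt n (x : Zn n) : (0 < n)%N -> (nat_of_ord x < n)%N.
Proof. by case: n x => // N x _; rewrite ltn_ord. Qed.

Lemma valZn_add n (x y : Zn n) : (0 < n)%N -> nat_of_ord (x + y) = ((x + y) %% n)%N.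
Proof. by case: n x y. Qed.

Lemma valZn_inZp n k : (0 < n)%N -> nat_of_ord (inZp k : Zn n) = (k %% n)%N.
Proof. by case: n. Qed.

Lemma valZn_mulrn n (x : Zn n) k : (0 < n)%N -> nat_of_ord (x *+ k) = ((x * k) %% n)%N.
Proof. by move=> n0; rewrite Zp_mulrn valZn_inZp. Qed.

Lemma valZn0 n : nat_of_ord (0 : Zn n) = 0%N.
Proof. by []. Qed.

Lemma Zn_inZpK n (x : Zn n) : inZp x = x.
Proof. exact: valZpK. Qed.


Lemma inZp_eqZn n k l : (0 < n)%N -> ((inZp k : Zn n) = inZp l) <-> (k = l %[mod n])%N.
Proof.
move=> n0; split => [h|h]; first by rewrite -(valZn_inZp n k n0) -(valZn_inZp n l n0) h.
by apply: val_inj; move: h; case: n n0.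
Qed.

Lemma Zn_eq n (x y : Zn n) : nat_of_ord x = nat_of_ord y -> x = y.
Proof. exact: val_inj. Qed.

Lemma addf_Zn n (H : zmodType) (f : Zn n -> H) : (0 < n)%N ->
  {morph f : x y / x + y} -> forall k, f (inZp k) = f (inZp 1) *+ k.
Proof.
move=> n0 fD.
have f0 : f 0 = 0.
  have h := fD 0 0; rewrite addr0 in h.
  by apply: (addrI (f 0)); rewrite -h addr0.
elim=> [|k IH]; first by rewrite mulr0n -f0; congr f; apply: Zn_eq; rewrite valZn_inZp // mod0n.
rewrite mulrS -IH -fD; congr f; apply: Zn_eq.
by rewrite valZn_add // !valZn_inZp // modnDm add1n.
Qed.

Lemma addf_Zn' n (H : zmodType) (f : Zn n -> H) : (0 < n)%N ->
  {morph f : x y / x + y} -> forall x : Zn n, f x = f (inZp 1) *+ x.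
Proof. by move=> n0 fD x; rewrite -addf_Zn // Zn_inZpK. Qed.

Lemma fst_mulrn (G H : zmodType) (p : G * H) k : (p *+ k).1 = p.1 *+ k.
Proof. by elim: k => [|k IH]; rewrite ?mulr0n // !mulrS /= IH. Qed.
Lemma snd_mulrn (G H : zmodType) (p : G * H) k : (p *+ k).2 = p.2 *+ k.
Proof. by elim: k => [|k IH]; rewrite ?mulr0n // !mulrS /= IH. Qed.

Lemma card_Zn {n} : (0 < n)%N -> #|{: Zn n}| = n.
Proof. by case: n => // N _; rewrite card_ord. Qed.

Lemma iso_card n m (b : lform (Zn n)) (c : lform (Zn m)) :
  (0 < n)%N -> (0 < m)%N -> form_iso b c -> n = m.
Proof.
move=> n0 m0 [f [_ [fb _]]].
by rewrite -(card_Zn n0) -(card_Zn m0); apply: bij_eq_card fb.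
Qed.

Set Implicit Arguments. Unset Strict Implicit.

Lemma modn_cancel n k x y : coprime k n -> (x * k = y * k %[mod n])%N -> (x = y %[mod n])%N.
Proof.
move=> ck h.
have h' : ((x * k)%N%:Z == (y*k)%N%:Z %[mod n%:Z])%Z by rewrite !modz_nat h.
rewrite eqz_mod_dvd !PoszM -mulrBl Gauss_dvdzl in h'; last by rewrite coprimezE /= coprime_sym.
rewrite -eqz_mod_dvd !modz_nat in h'.
by move/eqP: h' => [].
Qed.

Lemma mul_iso n k (a b : int) : (0 < n)%N -> coprime k n ->
  (b * k%:Z * k%:Z = a %[mod n%:Z])%Z -> form_iso (cform n a) (cform n b).
Proof.
move=> n0 ck hab.
exists (fun x => x *+ k); split; first by move=> x y; rewrite mulrnDl.
split.
  apply: injF_bij => x y /= /(congr1 (@nat_of_ord _)).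
  rewrite !valZn_mulrn // => /(modn_cancel ck).
  by rewrite !modn_small ?valZn_lt // => /val_inj.
move=> x y; rewrite !cformE; apply/qz_frac => //.
rewrite !valZn_mulrn // -!modz_nat.
rewrite modzMmr mulrAC modzMmr !PoszM.
have -> : b * (y%:Z * k%:Z) * (x%:Z * k%:Z) = (b * k%:Z * k%:Z) * x%:Z * y%:Z by ring.
by rewrite -mulrA -modzMml hab modzMml mulrA.
Qed.

Set Implicit Arguments. Unset Strict Implicit.

Lemma simple_crit n (q e : int) (k : int) : (0 < n)%N -> coprimez q n%:Z ->
  (e = 1 \/ e = -1) -> (q = e * k * k %[mod n%:Z])%Z -> simple_form (cform n q).
Proof.
move=> n0 cq he h.
have nz : (n%:Z != 0) by rewrite eqz_nat -lt0n.
set kn := `|(k %% n%:Z)%Z|%N.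
have knE : kn%:Z = (k %% n%:Z)%Z by rewrite /kn gez0_abs // modz_ge0.
have ck : coprime kn n.
  have : coprimez (e * k * k) n%:Z by rewrite /coprimez -gcdz_modl -h gcdz_modl.
  rewrite coprimezMl => /andP [_].
  by rewrite /coprimez -gcdz_modl -knE -/(coprimez _ _) coprimezE.
exists n, e; split => //; split => //.
apply: (mul_iso n0 ck); rewrite knE.
by rewrite modzMmr mulrAC modzMmr h.
Qed.

Lemma part_a n q : (0 < n)%N -> coprimez q n%:Z ->
  (simple_form (cform n q) <->
     exists k : int, (q = k ^+ 2 %[mod n%:Z])%Z \/ (q = - k ^+ 2 %[mod n%:Z])%Z).
Proof.
move=> n0 cq; split.
  move=> [m [e [m0 [he iso]]]].
  have nm := iso_card n m _ _ n0 m0 iso; subst m.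
  case: iso => f [fD [fb fr]].
  have := fr (inZp 1) (inZp 1); rewrite !cformE => /qz_frac -/(_ n0).
  rewrite valZn_inZp // -modz_nat.
  have h2 : ((q * (1%:Z %% n)%Z * (1%:Z %% n)%Z) %% n = q %% n)%Z.
    by rewrite modzMmr mulrAC modzMmr !mulr1.
  rewrite h2 => h.
  exists (f (inZp 1))%:Z.
  by case: he h => -> h; [left | right]; rewrite -h expr2 ?mul1r ?mulN1r // mulNr.
move=> [k [h|h]].
  by apply: (simple_crit (e := 1) (k := k)) => //; [left | rewrite mul1r -expr2].
by apply: (simple_crit (e := -1) (k := k)) => //; [right | rewrite mulN1r mulNr -expr2].
Qed.

Set Implicit Arguments. Unset Strict Implicit.

Lemma crt_iso n1 n2 q : (0 < n1)%N -> (0 < n2)%N -> coprime n1 n2 ->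
  form_iso (cform (n1 * n2) q) (osum (cform n1 (q * n2%:Z)) (cform n2 (q * n1%:Z))).
Proof.
move=> p1 p2 cop.
have p12 : (0 < n1 * n2)%N by rewrite muln_gt0 p1.
apply: iso_sym.
pose g := fun p : Zn n1 * Zn n2 =>
  (inZp (p.1 * n2 + p.2 * n1)%N : Zn (n1 * n2)).
have gv p : nat_of_ord (g p) = ((p.1 * n2 + p.2 * n1) %% (n1 * n2))%N.
  by rewrite /g valZn_inZp.
exists g; split.
  move=> [a b] [c d]; apply: Zn_eq; rewrite gv.
rewrite (valZn_add _ (g (a,b)) (g (c,d)) p12) !gv.
  have -> : ((a, b) + (c, d)).1 = a + c by [].
  have -> : ((a, b) + (c, d)).2 = b + d by [].
  rewrite !valZn_add // modnDm.
  rewrite !muln_modl [(n2 * n1)%N]mulnC modnDm.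
  congr (_ %% _)%N; ring.
split.
  apply: inj_card_bij; last by rewrite card_prod !card_Zn.
  move=> [a b] [c d] /(congr1 (@nat_of_ord _)); rewrite !gv => /eqP.
  rewrite chinese_remainder // => /andP [/eqP h1 /eqP h2].
  move: h1; rewrite addnC [(c * n2 + _)%N]addnC !modnMDl => h1.
  have cop' : coprime n2 n1 by rewrite coprime_sym.
  move: (modn_cancel cop' h1); rewrite !modn_small ?valZn_lt // => /val_inj /= ->.
  move: h2; rewrite !modnMDl => h2.
  by move: (modn_cancel cop h2); rewrite !modn_small ?valZn_lt // => /val_inj /= ->.
move=> [a b] [c d]; rewrite /osum /= !cformE !gv.
have nz1 : (n1%:R : rat) != 0 by rewrite pnatr_eq0 -lt0n.
have nz2 : (n2%:R : rat) != 0 by rewrite pnatr_eq0 -lt0n.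
have -> : (q * n2%:Z * a%:Z * c%:Z)%:~R / n1%:R + (q * n1%:Z * b%:Z * d%:Z)%:~R / n2%:R
   = (q * n2%:Z * a%:Z * c%:Z * n2%:Z + q * n1%:Z * b%:Z * d%:Z * n1%:Z)%:~R / (n1 * n2)%:R :> rat.
  rewrite natrM rmorphD !rmorphM /= -!pmulrn. field. by rewrite nz1 nz2.
apply/qz_frac => //.
rewrite -!modz_nat modzMmr mulrAC modzMmr /=.
apply/eqP; rewrite eqz_mod_dvd; apply/dvdzP.
exists (q * (a%:Z * d%:Z + b%:Z * c%:Z)); rewrite !PoszD !PoszM; ring.
Qed.

Set Implicit Arguments. Unset Strict Implicit.

Lemma morph0 (G H : zmodType) (f : G -> H) : {morph f : x y / x + y} -> f 0 = 0.
Proof.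
move=> fD; have h := fD 0 0; rewrite addr0 in h.
by apply: (addrI (f 0)); rewrite -h addr0.
Qed.

Lemma qz_cancel x y c : qz_eq (x + c) y -> qz_eq (0 + c) 0 -> qz_eq x y.
Proof.
rewrite /qz_eq => h1 h2.
have -> : x - y = (x + c - y) - (0 + c - 0) by rewrite add0r subr0 addrAC addrK.
exact: rpredB.
Qed.

Lemma cform0l n q (y : Zn n) : cform n q 0 y = 0.
Proof. by rewrite /cform /= mulr0 mul0r mul0r. Qed.

Lemma split_iso n m (e q : int) (H : zmodType) (c : lform H) :
  (0 < n)%N -> (0 < m)%N -> (e = 1 \/ e = -1) ->
  form_iso (cform n q) (osum (cform m e) c) ->
  exists n', [/\ n = (m * n')%N, coprime m n',
    simple_form (cform m (q * n'%:Z)) & form_iso (cform n' (q * m%:Z)) c].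
Proof.
move=> n0 m0 he [f [fD [[fi fK fiK] fr]]].
pose p1 := f (inZp 1).
pose a := nat_of_ord p1.1; pose u := p1.2.
have fE k : f (inZp k) = (p1.1 *+ k, u *+ k).
  by rewrite (addf_Zn _ _ _ n0 fD) -fst_mulrn -snd_mulrn; case: (_ *+ k).
have fA k : nat_of_ord (f (inZp k)).1 = ((a * k) %% m)%N by rewrite fE /= valZn_mulrn.
have f2 k : (f (inZp k)).2 = u *+ k by rewrite fE.
have f0 : f 0 = 0 := morph0 fD.
pose w := fi (inZp 1, 0); pose z := nat_of_ord w.
have fw : f w = (inZp 1, 0) by rewrite fiK.
have fz : f (inZp z) = (inZp 1, 0) by rewrite Zn_inZpK.
have az : ((a * z) %% m = 1 %% m)%N.
  by rewrite -fA fz; exact: valZn_inZp.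
have uz : u *+ z = 0 by rewrite -f2 fz.
have fn : f (inZp n) = 0.
  rewrite -f0; congr f; apply: Zn_eq; by rewrite valZn_inZp // modnn.
have an : ((a * n) %% m = 0)%N by rewrite -fA fn.
have un : u *+ n = 0 by rewrite -f2 fn.
have dmn' : (n %% m = 0)%N.
  rewrite -[n in LHS]muln1 -modnMmr -az modnMmr mulnA [(n * a)%N]mulnC.
  by rewrite -modnMml an mul0n mod0n.
have dmn : (m %| n)%N by apply/eqP.
pose n' := (n %/ m)%N.
have hnn : n = (m * n')%N by rewrite /n' mulnC divnK.
have n'0 : (0 < n')%N by move: n0; rewrite hnn muln_gt0 => /andP [].
have fmz : f (inZp (m * z)) = f (inZp 0).
  rewrite !fE mulr0n; congr pair.
    by apply: Zn_eq; rewrite valZn_mulrn // mulnCA modnMr.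
  by rewrite mulnC mulrnA uz mul0rn.
have dz : (n' %| z)%N.
  move/(can_inj fK)/(inZp_eqZn _ _ _ n0): fmz; rewrite mod0n hnn => /eqP.
  by rewrite -/(dvdn _ _) dvdn_pmul2l.
pose t := (z %/ n')%N.
have hz : z = (t * n')%N by rewrite /t divnK.
have cazm : coprime (a * z) m by rewrite -coprime_modl az coprime_modl coprime1n.
have cn'm : coprime n' m by move: cazm; rewrite hz !coprimeMl => /and3P [].
have ctm : coprime t m by move: cazm; rewrite hz !coprimeMl => /and3P [].
have c00 : qz_eq (0 + c 0 0) 0.
  by move: (fr 0 0); rewrite f0 /osum /= !cform0l.
exists n'; split => //; first by rewrite coprime_sym.
  move: (fr w w); rewrite fw /osum /= => /qz_cancel /(_ c00).
  rewrite !cformE valZn_inZp // -/z.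
  have nzm : (m%:R : rat) != 0 by rewrite pnatr_eq0 -lt0n.
  have nzn' : (n'%:R : rat) != 0 by rewrite pnatr_eq0 -lt0n.
  have -> : (q * z%:Z * z%:Z)%:~R / n%:R = (q * n'%:Z * t%:Z * t%:Z)%:~R / m%:R :> rat.
    rewrite hz hnn !PoszM !natrM !rmorphM /= -!pmulrn; field.
    by rewrite nzm nzn'.
  move/qz_frac => /(_ m0).
  rewrite -!modz_nat modzMmr mulrAC modzMmr !mulr1 => h.
  exists m, e; split => //; split => //; apply: iso_sym.
  by apply: (mul_iso m0 ctm).
have uper k : u *+ k = u *+ (k %% n).
  by rewrite {1}(divn_eq k n) mulrnDr mulnC mulrnA un mul0rn add0r.
have fm k : f (inZp (m * k)) = (0, u *+ (m * k)).
  rewrite fE; congr pair; apply: Zn_eq; by rewrite valZn_mulrn // mulnCA modnMr.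
pose phi := fun j : Zn n' => u *+ (m * j).
pose psi := fun h : H => (inZp (nat_of_ord (fi (0, h)) %/ m) : Zn n').
have phiE (j : nat) : u *+ (m * (j %% n')) = u *+ (m * j).
  by rewrite [RHS]uper [LHS]uper muln_modr -hnn modn_mod.
exists phi; split.
  move=> x y; rewrite /phi valZn_add // phiE mulnDr mulrnDr //.
split.
  exists psi.
    move=> j; rewrite /psi /phi -fm fK.
    have mjn : (m * j < n)%N by rewrite hnn ltn_pmul2l // valZn_lt.
    apply: Zn_eq; rewrite valZn_inZp // valZn_inZp // (modn_small mjn) mulKn //.
    by rewrite modn_small // valZn_lt.
  move=> h; rewrite /psi /phi valZn_inZp // phiE.
  set x := fi (0, h).
  have fx : f (inZp x) = (0, h) by rewrite Zn_inZpK fiK.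
  have ax : ((a * x) %% m = 0)%N by rewrite -fA fx.
  have dmx : (m %| x)%N.
    apply/eqP; rewrite -[nat_of_ord x]muln1 -modnMmr -az modnMmr mulnA [(x * a)%N]mulnC.
    by rewrite -modnMml ax mul0n mod0n.
  by rewrite mulnC divnK // -f2 fx.
move=> x y; move: (fr (inZp (m * x)) (inZp (m * y))).
rewrite !fm /osum /= cform0l add0r !cformE !valZn_inZp //.
rewrite !(modn_small (_ : (m * _ < n)%N)) ?hnn ?ltn_pmul2l ?valZn_lt //.
have nzm : (m%:R : rat) != 0 by rewrite pnatr_eq0 -lt0n.
have nzn' : (n'%:R : rat) != 0 by rewrite pnatr_eq0 -lt0n.
have -> : (q * (m * x)%N%:Z * (m * y)%N%:Z)%:~R / (m * n')%:R
    = (q * m%:Z * x%:Z * y%:Z)%:~R / n'%:R :> rat.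
  rewrite !PoszM !natrM !rmorphM /= -!pmulrn; field.
  by rewrite nzm nzn'.
by [].
Qed.

Set Implicit Arguments. Unset Strict Implicit.
Arguments iso_trans {G H K b c d}.
Arguments iso_sym {G H b c}.
Arguments iso_osum {G1 G2 H1 H2 b1 b2 c1 c2}.
Arguments iso_refl {G}.
Arguments ss_iso {G H b c}.

Lemma dvd_prod (s : seq nat) ni : ni \in s -> (ni %| \prod_(j <- s) j)%N.
Proof.
elim: s => //= x s IH; rewrite in_cons big_cons => /orP [/eqP->|h].
  exact: dvdn_mulr.
by apply: dvdn_mull; exact: IH.
Qed.

Lemma coprime_prod m (s : seq nat) : all (coprime m) s -> coprime m (\prod_(j <- s) j).
Proof.
elim: s => [|x s IH] /=; first by rewrite big_nil coprimen1.
by rewrite big_cons coprimeMr => /andP [-> /IH].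
Qed.

Lemma ss_to_seq (G : zmodType) (b : lform G) : semisimple_form b ->
  forall n q, (0 < n)%N -> form_iso (cform n q) b ->
  exists s : seq nat,
       [/\ (\prod_(ni <- s) ni)%N = n,
           pairwise coprime s &
           forall ni, ni \in s -> simple_form (cform ni (q * (n %/ ni)%N%:Z))].
Proof.
elim => [G' b' h | G' H1 H2 b' c1 c2 s1 s2 IH h] n q n0 iso.
  have := iso_card n 1 _ _ n0 isT (iso_trans iso h) => n1; subst n.
  by exists [::]; split => //; rewrite big_nil.
case: s1 => [m [e [m0 [he i1]]]].
have iso2 : form_iso (cform n q) (osum (cform m e) c2).
  exact: iso_trans iso (iso_trans h (iso_osum i1 (iso_refl c2))).
case: (split_iso n0 m0 he iso2) => n' [hnn cop hs ic].
have n'0 : (0 < n')%N by move: n0; rewrite hnn muln_gt0 => /andP [].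
case: (IH n' (q * m%:Z) n'0 ic) => s' [ps pw hsimp].
exists (m :: s'); split.
- by rewrite big_cons ps hnn.
- rewrite /= pw andbT; apply/allP => ni hi.
  by apply: coprime_dvdr (dvd_prod hi) _; rewrite ps.
- move=> ni; rewrite in_cons => /orP [/eqP -> | hi].
    by rewrite hnn mulKn.
  have := hsimp ni hi.
  have dn : (ni %| n')%N by rewrite -ps; exact: dvd_prod.
  by rewrite hnn -muln_divA // PoszM mulrA.
Qed.

Lemma seq_to_ss (s : seq nat) : forall n q, (0 < n)%N ->
  (\prod_(ni <- s) ni)%N = n -> pairwise coprime s ->
  (forall ni, ni \in s -> simple_form (cform ni (q * (n %/ ni)%N%:Z))) ->
  semisimple_form (cform n q).
Proof.
elim: s => [|m s IH] n q n0.
  rewrite big_nil => <- _ _; apply: ss_nil.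
  exists id; split => //; split; first by exists id.
  move=> x y.
  have zx (v : Zn 1) : v = 0 by apply: Zn_eq; have := valZn_lt _ v isT; case: (nat_of_ord v).
  rewrite (zx x) (zx y) !cform0l; exact: qz_refl.
rewrite big_cons => hn; rewrite /= => /andP [hall pw] hs.
set n' := (\prod_(j <- s) j)%N in hn hall.
have m0 : (0 < m)%N by move: n0; rewrite -hn muln_gt0 => /andP [].
have n'0 : (0 < n')%N by move: n0; rewrite -hn muln_gt0 => /andP [].
have cop : coprime m n' by exact: coprime_prod.
subst n.
apply: ss_iso (crt_iso q m0 n'0 cop) _.
apply: (ss_cons (c1 := cform m (q * n'%:Z)) (c2 := cform n' (q * m%:Z))).
- by have := hs m (mem_head _ _); rewrite mulKn.
- apply: (IH n' (q * m%:Z) n'0 erefl pw) => ni hi.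
  have := hs ni (_ : ni \in m :: s); rewrite ?in_cons ?hi ?orbT => /(_ isT).
  have dn : (ni %| n')%N by exact: dvd_prod.
  by rewrite -muln_divA // PoszM mulrA.
- exact: iso_refl.
Qed.


Theorem proposition1p7 (n : nat) (q : int) :
  (0 < n)%N -> coprimez q n%:Z ->
  (simple_form (cform n q) <->
     exists k : int, (q = k ^+ 2 %[mod n%:Z])%Z \/ (q = - k ^+ 2 %[mod n%:Z])%Z)
  /\
  (semisimple_form (cform n q) <->
     exists s : seq nat,
       [/\ (\prod_(ni <- s) ni)%N = n,
           pairwise coprime s &
           forall ni, ni \in s -> simple_form (cform ni (q * (n %/ ni)%N%:Z))]).
Proof.
move=> n0 cq; split; first exact: part_a.
split => [ss | [s [ps pw hs]]].
- exact: ss_to_seq ss n q n0 (iso_refl _).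
- exact: seq_to_ss s n q n0 ps pw hs.
Qed.
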